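(* For every integer $r\ge 0$ and all real $x$, $$\operatorname{sech}^{2r+1}x=\frac{(-1)^r}{(2r)!}\prod_{k=1}^{r}\Big(\frac{d^2}{dx^2}-(2k-1)^2\Big)\operatorname{sech}x=\frac{1}{(2r)!}\sum_{\rho=0}^{r}(-1)^{\rho}\,\mathcal G^r_\rho\,\frac{d^{2\rho}}{dx^{2\rho}}\operatorname{sech}x ,$$ where the integers $\mathcal G^r_\rho$ ($0\le\rho\le r$) are determined by $\mathcal G^0_0=1$, the conventions $\mathcal G^r_{-1}=\mathcal G^r_{r+1}=0$, and the recursion $\mathcal G^r_\rho=(2r-1)^2\mathcal G^{r-1}_\rho+\mathcal G^{r-1}_{\rho-1}$ for $r\ge1$, $0\le\rho\le r$. In particular $\mathcal G^r_r=1$.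
   Context: The empty product (for $r=0$) is the identity operator. *)

(* Defs.v *)
From Stdlib Require Import Reals Factorial.
Open Scope R_scope.

Definition sech (x : R) : R := / cosh x.

(* Given the chain D n = n-th derivative of a function g, [opchain D k n]
   is the n-th derivative of
     (d^2/dx^2 - (2k-1)^2) ... (d^2/dx^2 - 1^2) g .
   Indeed (d^2 - c) h has n-th derivative h^(n+2) - c h^(n). *)
Fixpoint opchain (D : nat -> R -> R) (k : nat) : nat -> R -> R :=
  match k with
  | O => D
  | S k' => fun n x =>
      opchain D k' (n + 2)%nat x - (2 * INR k' + 1) ^ 2 * opchain D k' n x
  end.

(* The integers G^r_rho (they are nonnegative), with G^r_rho = 0 for rho > r
   and the convention G^r_{-1} = 0 built into the match. *)
Fixpoint Gc (r rho : nat) : nat :=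
  match r with
  | O => match rho with O => 1%nat | S _ => 0%nat end
  | S r' => ((2 * r' + 1) ^ 2 * Gc r' rho
             + match rho with O => 0%nat | S p => Gc r' p end)%nat
  end.

(* Main.v *)
Require Import Defs.
From Stdlib Require Import Reals Factorial Lra Lia FunctionalExtensionality List.
Open Scope R_scope.
Import ListNotations.

Notation dpl := derivable_pt_lim.

Lemma dmult f g x a b : dpl f x a -> dpl g x b ->
  dpl (fun y => f y * g y) x (a * g x + f x * b).
Proof. intros; exact (derivable_pt_lim_mult f g x a b H H0). Qed.
Lemma dplus f g x a b : dpl f x a -> dpl g x b ->
  dpl (fun y => f y + g y) x (a + b).
Proof. intros; exact (derivable_pt_lim_plus f g x a b H H0). Qed.
Lemma dminus f g x a b : dpl f x a -> dpl g x b ->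
  dpl (fun y => f y - g y) x (a - b).
Proof. intros; exact (derivable_pt_lim_minus f g x a b H H0). Qed.
Lemma dscal f c x a : dpl f x a -> dpl (fun y => c * f y) x (c * a).
Proof. intros; exact (derivable_pt_lim_scal f c x a H). Qed.
Lemma dcomp f g x a b : dpl f x a -> dpl g (f x) b ->
  dpl (fun y => g (f y)) x (b * a).
Proof. intros; exact (derivable_pt_lim_comp f g x a b H H0). Qed.
Lemma dconst c x : dpl (fun _ => c) x 0.
Proof. exact (derivable_pt_lim_const c x). Qed.
Lemma did x : dpl (fun y => y) x 1.
Proof. exact (derivable_pt_lim_id x). Qed.

Lemma cosh_pos x : 0 < cosh x.
Proof. unfold cosh. pose proof (exp_pos x); pose proof (exp_pos (-x)); lra. Qed.

Lemma ch_sh x : cosh x * cosh x - sinh x * sinh x = 1.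
Proof.
  unfold cosh, sinh.
  assert (exp x * exp (-x) = 1) by (rewrite <- exp_plus; replace (x + - x) with 0 by ring; apply exp_0).
  nra.
Qed.

Definition th (x : R) := sinh x * sech x.

Lemma th_sech x : th x * th x = 1 - sech x ^ 2.
Proof.
  unfold th, sech. pose proof (cosh_pos x). pose proof (ch_sh x).
  transitivity ((cosh x * cosh x - (cosh x * cosh x - sinh x * sinh x)) * (/cosh x)^2). field. lra. rewrite H0. field. lra.
Qed.

Lemma dsech x : dpl sech x (- sech x * th x).
Proof.
  pose proof (cosh_pos x).
  assert (H1 := derivable_pt_lim_div (fun _ => 1) cosh x 0 (sinh x)
     (derivable_pt_lim_const 1 x) (derivable_pt_lim_cosh x) ltac:(lra)).
  replace (- sech x * th x) with ((0 * cosh x - sinh x * 1) / (cosh x)²).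
  2:{ unfold th, sech, Rsqr. field. lra. }
  eapply derivable_pt_lim_ext; [|exact H1].
  intros y. unfold sech, div_fct. simpl. field. pose proof (cosh_pos y); lra.
Qed.

Lemma dth x : dpl th x (sech x ^ 2).
Proof.
  unfold th. replace (sech x ^ 2) with (cosh x * sech x + sinh x * (- sech x * th x)).
  - apply dmult. apply derivable_pt_lim_sinh. apply dsech.
  - pose proof (th_sech x). unfold th in *. pose proof (cosh_pos x).
    assert (Hce : cosh x * sech x = 1) by (unfold sech; field; lra).
    transitivity (cosh x * sech x - sinh x * sech x * (sinh x * sech x)). ring. rewrite H, Hce. ring.
Qed.

Lemma dspow N x : dpl (fun y => sech y ^ N) x (- INR N * sech x ^ N * th x).
Proof.
  assert (H := dcomp sech (fun y => y ^ N) x _ _ (dsech x) (derivable_pt_lim_pow (sech x) N)).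
  replace (- INR N * sech x ^ N * th x) with (INR N * sech x ^ Init.Nat.pred N * (- sech x * th x)).
  exact H. destruct N. simpl. ring. simpl Init.Nat.pred. simpl pow. ring.
Qed.

Fixpoint ev (l : list R) (t : R) : R :=
  match l with [] => 0 | a :: l' => a + t * ev l' t end.
Fixpoint padd (a b : list R) : list R :=
  match a, b with
  | [], _ => b
  | _, [] => a
  | x :: a', y :: b' => (x + y) :: padd a' b'
  end.
Definition pscale (c : R) (a : list R) := map (fun x => c * x) a.
Fixpoint pder (l : list R) : list R :=
  match l with [] => [] | a :: l' => padd l' (0 :: pder l') end.

Lemma ev_padd a b t : ev (padd a b) t = ev a t + ev b t.
Proof.
  revert b; induction a; intros b; simpl. ring.
  destruct b; simpl. ring. rewrite IHa. ring.
Qed.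
Lemma ev_pscale c a t : ev (pscale c a) t = c * ev a t.
Proof. induction a; simpl. ring. rewrite IHa. ring. Qed.

Lemma dev l t : dpl (fun u => ev l u) t (ev (pder l) t).
Proof.
  induction l; simpl.
  - apply dconst.
  - rewrite ev_padd. simpl.
    replace (ev l t + (0 + t * ev (pder l) t)) with (0 + (1 * ev l t + t * ev (pder l) t)) by ring.
    apply dplus. apply dconst. apply dmult. apply did. exact IHl.
Qed.

Definition step (p : list R) : list R :=
  padd (pscale (-1) (0 :: p)) (padd (pder p) (pscale (-1) (0 :: 0 :: pder p))).

Fixpoint P (n : nat) : list R := match n with O => [1] | S k => step (P k) end.

Definition DD (n : nat) (x : R) : R := sech x * ev (P n) (th x).

Lemma DD_deriv n x : dpl (DD n) x (DD (S n) x).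
Proof.
  unfold DD. simpl P. unfold step. rewrite !ev_padd, !ev_pscale. simpl ev.
  assert (H := dmult sech (fun y => ev (P n) (th y)) x _ _ (dsech x)
    (dcomp th (fun u => ev (P n) u) x _ _ (dth x) (dev (P n) (th x)))).
  eapply derivable_pt_lim_ext; [| refine (eq_ind _ (fun l => dpl _ x l) H _ _)].
  - reflexivity.
  - pose proof (th_sech x). replace (sech x ^ 2) with (1 - th x * th x) by lra. ring.
Qed.

Lemma opd (D : nat -> R -> R) (HD : forall n x, dpl (D n) x (D (S n) x)) r :
  forall n x, dpl (opchain D r n) x (opchain D r (S n) x).
Proof.
  induction r; intros n x; simpl. apply HD.
  apply dminus. apply IHr. apply dscal. apply IHr.
Qed.

Lemma m1sq r : (-1) ^ r * (-1) ^ r = 1.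
Proof. induction r; simpl. ring. transitivity ((-1)^r * (-1)^r); [ring | exact IHr]. Qed.

Lemma opmain (D : nat -> R -> R) (HD : forall n x, dpl (D n) x (D (S n) x))
  (H0 : D O = sech) r : forall x,
  opchain D r 0 x = (-1) ^ r * INR (fact (2 * r)) * sech x ^ (2 * r + 1).
Proof.
  induction r; intros x.
  - simpl. rewrite H0. ring.
  - set (c := (-1) ^ r * INR (fact (2 * r))) in *.
    set (N := (2 * r + 1)%nat) in *.
    assert (E0 : opchain D r 0 = fun y => c * sech y ^ N) by (apply functional_extensionality; exact IHr).
    assert (E1 : forall y, opchain D r 1 y = c * (- INR N * sech y ^ N * th y)).
    { intros y. apply (uniqueness_limite (opchain D r 0) y).
      apply opd; auto. rewrite E0. apply dscal. apply dspow. }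
    assert (E1' : opchain D r 1 = fun y => (c * - INR N) * (sech y ^ N * th y)).
    { apply functional_extensionality; intros y; rewrite E1; ring. }
    assert (E2 : opchain D r 2 x = c * (INR N ^ 2 * sech x ^ N - INR N * (INR N + 1) * sech x ^ N * sech x ^ 2)).
    { transitivity ((c * - INR N) * ((- INR N * sech x ^ N * th x) * th x + sech x ^ N * sech x ^ 2)).
      apply (uniqueness_limite (opchain D r 1) x).
      apply opd; auto. rewrite E1'. apply dscal. apply dmult. apply dspow. apply dth.
      replace (- INR N * sech x ^ N * th x * th x) with (- INR N * sech x ^ N * (th x * th x)) by ring.
      rewrite th_sech. ring. }
    simpl opchain. rewrite E2, IHr. fold c. fold N.
    replace (2 * S r)%nat with (S (S (2 * r))) by lia.
    replace (S (S (2 * r)) + 1)%nat with (N + 2)%nat by (unfold N; lia).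
    rewrite pow_add.
    replace (fact (S (S (2 * r)))) with (S (S (2 * r)) * (S (2 * r) * fact (2 * r)))%nat by reflexivity.
    unfold c. set (F := fact (2 * r)). unfold N.
    rewrite !mult_INR, !S_INR, !plus_INR, !mult_INR.
    simpl pow. simpl INR. ring.
Qed.

Lemma Gc_big r : forall rho, (r < rho)%nat -> Gc r rho = 0%nat.
Proof.
  induction r; intros rho H.
  - destruct rho. lia. reflexivity.
  - simpl. rewrite IHr by lia. destruct rho. lia. rewrite IHr by lia. lia.
Qed.

Lemma Gc_diag r : Gc r r = 1%nat.
Proof. induction r. reflexivity. simpl. rewrite Gc_big by lia. rewrite IHr. lia. Qed.

Lemma opsum (D : nat -> R -> R) r : forall n x,
  opchain D r n x = sum_f_R0 (fun rho => (-1) ^ (r + rho) * INR (Gc r rho) * D (n + 2 * rho)%nat x) r.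
Proof.
  induction r; intros n x.
  - simpl. rewrite Nat.add_0_r. ring.
  - simpl opchain. rewrite !IHr.
    set (c := (2 * INR r + 1) ^ 2).
    change ((2 * INR r + 1) * ((2 * INR r + 1) * 1)) with c.
    transitivity (sum_f_R0 (fun rho => (-1) ^ (S r + rho) * c * INR (Gc r rho) * D (n + 2 * rho)%nat x) (S r)
       + sum_f_R0 (fun rho => (-1) ^ (S r + rho) * INR (match rho with O => 0%nat | S p => Gc r p end) * D (n + 2 * rho)%nat x) (S r)).
    2:{ rewrite <- plus_sum. apply sum_eq. intros i _.
        change (Gc (S r) i) with ((2 * r + 1) ^ 2 * Gc r i + match i with O => 0%nat | S p => Gc r p end)%nat.
        rewrite plus_INR, mult_INR, pow_INR, plus_INR, mult_INR. unfold c. simpl INR. ring. }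
    rewrite tech5. rewrite (Gc_big r (S r)) by lia.
    rewrite (decomp_sum _ (S r)) by lia. simpl Init.Nat.pred.
    rewrite scal_sum.
    replace (sum_f_R0 (fun rho => (-1) ^ (S r + rho) * c * INR (Gc r rho) * D (n + 2 * rho)%nat x) r)
      with (- sum_f_R0 (fun i => (-1) ^ (r + i) * INR (Gc r i) * D (n + 2 * i)%nat x * c) r).
    2:{ transitivity (-1 * sum_f_R0 (fun i => (-1) ^ (r + i) * INR (Gc r i) * D (n + 2 * i)%nat x * c) r).
        ring. rewrite scal_sum. apply sum_eq. intros i _.
        simpl pow. ring. }
    replace (sum_f_R0 (fun i => (-1) ^ (S r + S i) * INR (Gc r i) * D (n + 2 * S i)%nat x) r)
      with (sum_f_R0 (fun rho => (-1) ^ (r + rho) * INR (Gc r rho) * D (n + 2 + 2 * rho)%nat x) r).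
    2:{ apply sum_eq. intros i _. replace (S r + S i)%nat with (S (S (r + i))) by lia.
        replace (n + 2 * S i)%nat with (n + 2 + 2 * i)%nat by lia. simpl pow. ring. }
    change (INR 0) with 0. ring.
Qed.

Theorem mainTheorem1 :
  exists D : nat -> R -> R,
    D O = sech /\
    (forall (n : nat) (x : R), derivable_pt_lim (D n) x (D (S n) x)) /\
    (forall (r : nat) (x : R),
       sech x ^ (2 * r + 1) =
         (-1) ^ r / INR (fact (2 * r)) * opchain D r O x /\
       sech x ^ (2 * r + 1) =
         / INR (fact (2 * r)) *
           sum_f_R0 (fun rho => (-1) ^ rho * INR (Gc r rho) * D (2 * rho)%nat x) r) /\
    (forall r : nat, Gc r r = 1%nat).
Proof.
  assert (H0 : DD O = sech).
  { apply functional_extensionality; intros x. unfold DD. simpl. ring. }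
  exists DD. split; [exact H0|]. split; [exact DD_deriv|]. split; [|exact Gc_diag].
  intros r x.
  assert (Hm := opmain DD DD_deriv H0 r x).
  assert (HF := INR_fact_neq_0 (2 * r)).
  assert (E1 : sech x ^ (2 * r + 1) = (-1) ^ r / INR (fact (2 * r)) * opchain DD r 0 x).
  { rewrite Hm. unfold Rdiv.
    transitivity (((-1)^r * (-1)^r) * (INR (fact (2 * r)) * / INR (fact (2 * r))) * sech x ^ (2 * r + 1)).
    rewrite m1sq, Rinv_r by exact HF. ring. ring. }
  split; [exact E1|].
  rewrite E1, opsum. unfold Rdiv.
  rewrite (Rmult_comm ((-1) ^ r)), Rmult_assoc. f_equal.
  rewrite scal_sum. apply sum_eq. intros i _.
  rewrite pow_add, Nat.add_0_l.
  transitivity (((-1)^r * (-1)^r) * (-1) ^ i * INR (Gc r i) * DD (2 * i)%nat x).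
  ring. rewrite m1sq. ring.
Qed.
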